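(* Let $(p_n)$ be integers diverging to infinity and $(\kappa_n)$ a sequence in $(0,\infty)$ with $\kappa_n=o(p_n)$. Then $\sqrt{p_n\tilde e_{n2}}-1=O(\kappa_n^2/p_n^2)$ as $n\to\infty$.
   Context: For integer $p\ge2$ and $\kappa>0$, $c_{p,\kappa}=1/\int_{-1}^1(1-t^2)^{(p-3)/2}e^{\kappa t}dt$. $\tilde e_{n2}$ is the variance of the distribution on $[-1,1]$ with density $u\mapsto c_{p_n,\kappa_n}(1-u^2)^{(p_n-3)/2}e^{\kappa_nu}$. *)

(* Defs.v *)
From Stdlib Require Import Reals ClassicalEpsilon.
Open Scope R_scope.

(* Riemann integral of f over [a,b]; junk value 0 if f is not Riemann integrable. *)
Definition RInt (f : R -> R) (a b : R) : R :=
  match excluded_middle_informative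
          (exists I : R, exists pr : Riemann_integrable f a b, RiemannInt pr = I) with
  | left h => proj1_sig (constructive_indefinite_description _ h)
  | right _ => 0
  end.

(* (1 - t^2)^((p-3)/2), for integer p >= 2 and t in (-1,1):
   for p >= 3 this is sqrt(1-t^2)^(p-3); for p = 2 it is 1/sqrt(1-t^2). *)
Definition wgt (p : nat) (t : R) : R :=
  sqrt (1 - t ^ 2) ^ (p - 3) / sqrt (1 - t ^ 2) ^ (3 - p).

Definition dens0 (p : nat) (kappa : R) (t : R) : R := wgt p t * exp (kappa * t).

Definition c_pk (p : nat) (kappa : R) : R := 1 / RInt (dens0 p kappa) (-1) 1.

Definition mean_pk (p : nat) (kappa : R) : R :=
  RInt (fun u => u * (c_pk p kappa * dens0 p kappa u)) (-1) 1.

(* variance: \tilde e_{n2} = variance_pk p_n kappa_n *)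
Definition variance_pk (p : nat) (kappa : R) : R :=
  RInt (fun u => (u - mean_pk p kappa) ^ 2 * (c_pk p kappa * dens0 p kappa u)) (-1) 1.

(* Main.v *)
Require Import Defs.
From Stdlib Require Import Reals ClassicalEpsilon Lra Lia Psatz FunctionalExtensionality.
From Coquelicot Require Import Coquelicot.
Open Scope R_scope.

Lemma dens_eq p k : (3 <= p)%nat -> dens0 p k = fun t => sqrt (1 - t ^ 2) ^ (p - 3) * exp (k * t).
Proof.
  intros H. apply functional_extensionality. intros t. unfold dens0, wgt.
  replace (3 - p)%nat with 0%nat by lia. simpl. unfold Rdiv. rewrite Rinv_1, Rmult_1_r. reflexivity.
Qed.

Lemma cmult (f g : R -> R) x : continuous f x -> continuous g x -> continuous (fun y => f y * g y) x.
Proof. intros. apply (continuous_mult f g x); auto. Qed.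

Lemma cpow (f : R -> R) n x : continuous f x -> continuous (fun y => f y ^ n) x.
Proof.
  intros H. induction n; simpl.
  - apply continuous_const.
  - apply cmult; auto.
Qed.

Definition poly (c0 c1 c2 c3 c4 t : R) := c0 + c1 * t + c2 * t ^ 2 + c3 * t ^ 3 + c4 * t ^ 4.

Lemma cpoly c0 c1 c2 c3 c4 x : continuous (poly c0 c1 c2 c3 c4) x.
Proof. apply (@ex_derive_continuous R_AbsRing R_NormedModule). unfold poly. auto_derive. auto. Qed.

Lemma cdens p k x : (3 <= p)%nat -> continuous (dens0 p k) x.
Proof.
  intros H. rewrite dens_eq by exact H. apply cmult.
  - apply cpow. apply continuous_sqrt_comp. apply (@ex_derive_continuous R_AbsRing R_NormedModule). auto_derive. auto.
  - apply continuous_exp_comp. apply (@ex_derive_continuous R_AbsRing R_NormedModule). auto_derive. auto.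
Qed.

Lemma ex_pd p k c0 c1 c2 c3 c4 : (3 <= p)%nat ->
  ex_RInt (fun t => poly c0 c1 c2 c3 c4 t * dens0 p k t) (-1) 1.
Proof.
  intros H. apply (@ex_RInt_continuous R_CompleteNormedModule). intros. apply cmult. apply cpoly. apply cdens; auto.
Qed.

Definition Mo p k (j : nat) := RInt (fun t => t ^ j * dens0 p k t) (-1) 1.

Lemma ex_mo p k j : (3 <= p)%nat -> ex_RInt (fun t => t ^ j * dens0 p k t) (-1) 1.
Proof.
  intros H. apply (@ex_RInt_continuous R_CompleteNormedModule). intros. apply cmult.
  apply cpow, continuous_id. apply cdens; auto.
Qed.

Lemma int_pd p k c0 c1 c2 c3 c4 : (3 <= p)%nat ->
  RInt (fun t => poly c0 c1 c2 c3 c4 t * dens0 p k t) (-1) 1 =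
  c0 * Mo p k 0 + c1 * Mo p k 1 + c2 * Mo p k 2 + c3 * Mo p k 3 + c4 * Mo p k 4.
Proof.
  intros H. apply (@is_RInt_unique R_CompleteNormedModule).
  assert (I : forall j, is_RInt (fun t => t ^ j * dens0 p k t) (-1) 1 (Mo p k j)).
  { intros j. unfold Mo. apply (@RInt_correct R_CompleteNormedModule). apply ex_mo; auto. }
  assert (S := @is_RInt_plus R_NormedModule _ _ _ _ _ _
    (@is_RInt_plus R_NormedModule _ _ _ _ _ _
      (@is_RInt_plus R_NormedModule _ _ _ _ _ _
        (@is_RInt_plus R_NormedModule _ _ _ _ _ _ (@is_RInt_scal R_NormedModule _ _ _ c0 _ (I 0%nat)) (@is_RInt_scal R_NormedModule _ _ _ c1 _ (I 1%nat)))
        (@is_RInt_scal R_NormedModule _ _ _ c2 _ (I 2%nat)))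
      (@is_RInt_scal R_NormedModule _ _ _ c3 _ (I 3%nat)))
    (@is_RInt_scal R_NormedModule _ _ _ c4 _ (I 4%nat))).
  revert S. unfold plus, scal; simpl. unfold mult; simpl.
  apply (@is_RInt_ext R_NormedModule). intros x _. unfold poly. simpl. ring.
Qed.

Lemma bridge f : ex_RInt f (-1) 1 -> Defs.RInt f (-1) 1 = RInt f (-1) 1.
Proof.
  intros H. assert (pr := ex_RInt_Reals_0 _ _ _ H).
  unfold Defs.RInt. destruct excluded_middle_informative as [h|h].
  - destruct (constructive_indefinite_description _ h) as [I [pr' HI]]. simpl.
    rewrite (RInt_Reals _ _ _ pr'). auto.
  - exfalso. apply h. exists (RiemannInt pr), pr. reflexivity.
Qed.

Lemma Dint_pd p k c0 c1 c2 c3 c4 : (3 <= p)%nat ->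
  Defs.RInt (fun t => poly c0 c1 c2 c3 c4 t * dens0 p k t) (-1) 1 =
  c0 * Mo p k 0 + c1 * Mo p k 1 + c2 * Mo p k 2 + c3 * Mo p k 3 + c4 * Mo p k 4.
Proof. intros H. rewrite bridge by (apply ex_pd; auto). apply int_pd; auto. Qed.

Lemma dens_pos p k t : (3 <= p)%nat -> -1 < t < 1 -> 0 < dens0 p k t.
Proof.
  intros H Ht. rewrite dens_eq by auto. apply Rmult_lt_0_compat.
  - apply pow_lt. apply sqrt_lt_R0. nra.
  - apply exp_pos.
Qed.

Lemma nonneg_pd p k c0 c1 c2 c3 c4 : (3 <= p)%nat ->
  (forall t, -1 < t < 1 -> 0 <= poly c0 c1 c2 c3 c4 t) ->
  0 <= c0 * Mo p k 0 + c1 * Mo p k 1 + c2 * Mo p k 2 + c3 * Mo p k 3 + c4 * Mo p k 4.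
Proof.
  intros H Hp. rewrite <- int_pd by auto. apply RInt_ge_0. lra. apply ex_pd; auto.
  intros x Hx. apply Rmult_le_pos. auto. left. apply dens_pos; auto.
Qed.

Lemma M0_pos p k : (3 <= p)%nat -> 0 < Mo p k 0.
Proof.
  intros H. unfold Mo. apply RInt_gt_0. lra.
  - intros x Hx. simpl. rewrite Rmult_1_l. apply dens_pos; auto.
  - intros x Hx. apply cmult. apply continuous_const. apply cdens; auto.
Qed.
Lemma pow_le_one (s : R) (m : nat) : 0 <= s <= 1 -> s ^ m <= 1.
Proof. intros H. induction m; simpl. lra. pose proof (pow_le s m (proj1 H)). nra. Qed.

Lemma sqrt_pow_derive (m : nat) (x : R) :
  is_derive (fun y => sqrt y ^ (S (S (S m)))) x (INR (S (S (S m))) / 2 * sqrt x ^ (S m)).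
Proof.
  destruct (Rlt_or_le 0 x) as [Hx|Hx].
  - assert (Hs : 0 < sqrt x) by (apply sqrt_lt_R0; lra).
    assert (H := is_derive_pow (fun y => sqrt y) (S (S (S m))) x (/ (2 * sqrt x))).
    simpl Init.Nat.pred in H.
    replace (INR (S (S (S m))) / 2 * sqrt x ^ (S m))
      with (INR (S (S (S m))) * / (2 * sqrt x) * sqrt x ^ (S (S m))).
    + apply H. apply is_derive_Reals. apply derivable_pt_lim_sqrt. exact Hx.
    + simpl pow. field. lra.
  - destruct (Rle_lt_or_eq_dec x 0 Hx) as [Hx'|Hx'].
    + assert (E : sqrt x = 0) by (apply sqrt_neg_0; lra).
      rewrite E. simpl pow. rewrite Rmult_0_l, Rmult_0_r.
      apply is_derive_ext_loc with (fun _ => 0).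
      * assert (Hp : 0 < - x) by lra.
        exists (mkposreal _ Hp). intros y Hy. simpl in Hy.
        unfold ball in Hy; simpl in Hy; unfold AbsRing_ball, abs, minus, plus, opp in Hy; simpl in Hy.
        rewrite sqrt_neg_0.
        -- simpl. ring.
        -- apply Rabs_def2 in Hy. lra.
      * apply is_derive_Reals. apply derivable_pt_lim_const.
    + subst x. rewrite sqrt_0. simpl pow. rewrite Rmult_0_l, Rmult_0_r.
      apply is_derive_Reals. intros eps Heps.
      assert (Hd : 0 < Rmin 1 (eps * eps)).
      { apply Rmin_glb_lt; nra. }
      exists (mkposreal _ Hd). intros h Hh0 Hh. simpl in Hh.
      rewrite Rplus_0_l, sqrt_0. simpl pow. rewrite Rmult_0_l, Rminus_0_r, Rminus_0_r.
      destruct (Rle_or_lt h 0) as [Hn|Hpos].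
      * rewrite sqrt_neg_0 by lra. simpl. rewrite !Rmult_0_l. unfold Rdiv. rewrite Rmult_0_l, Rabs_R0. lra.
      * assert (Hh1 : h < 1) by (apply Rabs_def2 in Hh; pose proof (Rmin_l 1 (eps*eps)); lra).
        assert (Hh2 : h < eps * eps) by (apply Rabs_def2 in Hh; pose proof (Rmin_r 1 (eps*eps)); lra).
        set (s := sqrt h).
        assert (Hs0 : 0 < s) by (apply sqrt_lt_R0; lra).
        assert (Hss : s * s = h) by (apply sqrt_sqrt; lra).
        assert (Hs1 : s < 1).
        { rewrite <- sqrt_1. apply sqrt_lt_1_alt. lra. }
        assert (Hse : s < eps).
        { rewrite <- (sqrt_square eps) by lra. apply sqrt_lt_1_alt. lra. }
        replace (s * (s * (s * s ^ m)) / h) with (s * s ^ m).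
        2:{ rewrite <- Hss. field. lra. }
        assert (0 <= s ^ m <= 1).
        { split. apply pow_le; lra. apply pow_le_one. lra. }
        rewrite Rabs_right by nra. nra.
Qed.

Lemma deriv_change (f : R -> R) x l l' : is_derive f x l -> l = l' -> is_derive f x l'.
Proof. intros H E; subst; auto. Qed.

Lemma ibp (n : nat) k (f df : R -> R) :
  (forall x, is_derive f x (df x)) -> (forall x, continuous df x) ->
  RInt (fun t => (df t * (1 - t ^ 2) - (INR (S (S (S (S n)))) - 1) * t * f t
                  + k * f t * (1 - t ^ 2)) * dens0 (S (S (S (S n)))) k t) (-1) 1 = 0.
Proof.
  intros Hf Hdf.
  set (Q := fun t => sqrt (1 - t ^ 2) ^ (S (S (S n)))).
  set (dQ := fun t => (-2 * t) * (INR (S (S (S n))) / 2 * sqrt (1 - t ^ 2) ^ (S n))).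
  assert (HQ : forall x, is_derive Q x (dQ x)).
  { intros x. assert (Hg : is_derive (fun t => 1 - t ^ 2) x (-2 * x)).
    { auto_derive. auto. ring. }
    exact (is_derive_comp (fun y => sqrt y ^ (S (S (S n)))) (fun t => 1 - t ^ 2) x _ _
             (sqrt_pow_derive n (1 - x ^ 2)) Hg). }
  set (G := fun t => f t * (Q t * exp (k * t))).
  set (G' := fun t => df t * (Q t * exp (k * t)) + f t * (dQ t * exp (k * t) + Q t * (k * exp (k * t)))).
  assert (HG : forall x, is_derive G x (G' x)).
  { intros x. assert (HE : is_derive (fun t => exp (k * t)) x (k * exp (k * x))).
    { auto_derive. auto. ring. }
    assert (HQE := is_derive_mult Q (fun t => exp (k * t)) x _ _ (HQ x) HE Rmult_comm).
    exact (is_derive_mult f (fun t => Q t * exp (k * t)) x _ _ (Hf x) HQE Rmult_comm). }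
  assert (Hcs : forall x, continuous (fun t => sqrt (1 - t ^ 2)) x).
  { intros x. apply continuous_sqrt_comp. apply (@ex_derive_continuous R_AbsRing R_NormedModule). auto_derive. auto. }
  assert (Hce : forall x, continuous (fun t => exp (k * t)) x).
  { intros x. apply (@ex_derive_continuous R_AbsRing R_NormedModule). auto_derive. auto. }
  assert (Hcid : forall x, continuous (fun t : R => t) x) by (intros; apply continuous_id).
  assert (HcG' : forall x, continuous G' x).
  { intros x. unfold G', Q, dQ.
    apply (continuous_plus (fun t => df t * _)).
    - apply cmult; auto. apply cmult; auto. apply cpow; auto.
    - apply cmult. apply (@ex_derive_continuous R_AbsRing R_NormedModule). eexists; apply Hf.
      apply (continuous_plus (fun t => _ * _)).
      + apply cmult; auto. apply cmult. apply cmult. apply continuous_const. auto.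
        apply cmult. apply continuous_const. apply cpow; auto.
      + apply cmult. apply cpow; auto. apply cmult. apply continuous_const. auto. }
  assert (I := @is_RInt_derive R_CompleteNormedModule G G' (-1) 1 (fun x _ => HG x) (fun x _ => HcG' x)).
  assert (G1 : G 1 = 0).
  { unfold G, Q. replace (1 - 1 ^ 2) with 0 by ring. rewrite sqrt_0. simpl. ring. }
  assert (G2 : G (-1) = 0).
  { unfold G, Q. replace (1 - (-1) ^ 2) with 0 by ring. rewrite sqrt_0. simpl. ring. }
  rewrite G1, G2 in I.
  apply (@is_RInt_unique R_CompleteNormedModule).
  replace 0 with (minus 0 0 : R) by (unfold minus, plus, opp; simpl; ring).
  revert I. apply (@is_RInt_ext R_NormedModule).
  intros t Ht. rewrite Rmin_left in Ht by lra. rewrite Rmax_right in Ht by lra.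
  assert (Hs : sqrt (1 - t ^ 2) * sqrt (1 - t ^ 2) = 1 - t ^ 2) by (apply sqrt_sqrt; nra).
  rewrite dens_eq by lia. unfold G', Q, dQ. simpl (S (S (S (S n))) - 3)%nat.
  rewrite !S_INR.
  set (s := sqrt (1 - t ^ 2)) in *.
  replace (s ^ S (S (S n))) with (s * s * s ^ (S n)) by (simpl; ring).
  rewrite Hs. simpl. field.
Qed.
Lemma sqrt_minus1 (x : R) : 0 <= x -> Rabs (sqrt x - 1) <= Rabs (x - 1).
Proof.
  intros Hx. assert (Hs := sqrt_pos x). assert (Hss := sqrt_sqrt x Hx).
  replace (x - 1) with ((sqrt x - 1) * (sqrt x + 1)) by nra.
  rewrite Rabs_mult. rewrite (Rabs_right (sqrt x + 1)) by lra.
  assert (0 <= Rabs (sqrt x - 1)) by apply Rabs_pos. nra.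
Qed.

Lemma alg (P k m1 m2 m3 m4 : R) :
  4 <= P -> 0 < k -> 9 * (k * k) <= P * P ->
  k - (P - 1) * m1 - k * m2 = 0 ->
  1 + k * m1 - P * m2 - k * m3 = 0 ->
  2 * m1 + k * m2 - (P + 1) * m3 - k * m4 = 0 ->
  0 <= m2 - m1 * m1 ->
  m4 - m2 * m2 <= 4 * (m2 - m1 * m1) ->
  0 <= m2 <= 1 -> 0 <= m4 - m2 * m2 ->
  Rabs (sqrt (P * (m2 - m1 * m1)) - 1) <= 8 * (k ^ 2 / P ^ 2).
Proof.
  intros HP Hk Hk2 H1 H2 H3 HV HVs Hm2 HVs0.
  set (V := m2 - m1 * m1) in *.
  set (D := 1 / (P + 1) - P / ((P - 1) * (P - 1))).
  set (B := (m4 - m2 * m2) / (P + 1) + (1 - m2) * (1 - m2) * D).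
  assert (E1 : m1 = k * (1 - m2) / (P - 1)).
  { field_simplify_eq; [lra | lra]. }
  assert (E3 : m3 = (2 * m1 + k * m2 - k * m4) / (P + 1)).
  { field_simplify_eq; [lra | lra]. }
  assert (EV : P * V - 1 = k * k * B).
  { unfold V, B, D. replace (P * (m2 - m1 * m1) - 1) with (k * m1 - k * m3 - P * (m1 * m1)) by lra.
    rewrite E3, E1. field. split; lra. }
  assert (HD : D = (1 - 3 * P) / ((P + 1) * ((P - 1) * (P - 1)))).
  { unfold D. field. split; lra. }
  set (den := (P + 1) * ((P - 1) * (P - 1))).
  assert (Hden : 9/16 * (P * (P * P)) <= den).
  { unfold den. assert (P - 1 >= 3/4 * P) by lra. assert (P+1 >= P) by lra. 
    assert ((P-1)*(P-1) >= 9/16 * (P*P)) by nra. nra. }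
  assert (HDd : D * den = 1 - 3 * P).
  { rewrite HD. unfold den. field. split; lra. }
  assert (Hden0 : 0 < den) by nra.
  assert (HDneg : D <= 0).
  { destruct (Rle_or_lt D 0) as [h|h]; [exact h|]. assert (0 < D * den) by (apply Rmult_lt_0_compat; lra). lra. }
  assert (HPP : 0 < P * P) by nra.
  assert (HDlow : - (8 / (P * P)) <= D).
  { assert (HDP : - 8 <= D * (P * P)).
    { destruct (Rle_or_lt (-8) (D * (P * P))) as [h|h]; [exact h|].
      exfalso. assert (D * (P * P) * den < - 8 * den) by nra.
      assert (D * (P * P) * den = (1 - 3 * P) * (P * P)) by (rewrite <- HDd; ring).
      nra. }
    apply Rmult_le_reg_r with (P * P). exact HPP.
    replace (- (8 / (P * P)) * (P * P)) with (-8) by (field; lra). exact HDP. }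
  assert (Hq : 0 <= (1 - m2) * (1 - m2) <= 1) by nra.
  assert (HBlow : - (8 / (P * P)) <= B).
  { unfold B. assert (0 <= (m4 - m2 * m2) / (P + 1)).
    { apply Rmult_le_pos. lra. left; apply Rinv_0_lt_compat; lra. }
    assert (D <= (1 - m2) * (1 - m2) * D) by nra. lra. }
  assert (HBup : B <= 8 / (P * P)).
  { assert (HB1 : B <= (m4 - m2 * m2) / (P + 1)).
    { unfold B. assert ((1 - m2) * (1 - m2) * D <= 0) by nra. lra. }
    assert (HB2 : (m4 - m2 * m2) / (P + 1) <= 4 * V / (P + 1)).
    { unfold Rdiv. apply Rmult_le_compat_r. left; apply Rinv_0_lt_compat; lra. lra. }
    assert (HVe : V = (1 + k * k * B) / P) by (field_simplify_eq; lra).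
    assert (HB3 : B * (P * (P + 1)) <= 4 * (1 + k * k * B)).
    { assert (B * (P + 1) <= 4 * V).
      { apply Rmult_le_reg_r with (/ (P + 1)). apply Rinv_0_lt_compat; lra.
        rewrite Rmult_assoc, Rinv_r by lra. rewrite Rmult_1_r. unfold Rdiv in HB2. lra. }
      assert (4 * V * P = 4 * (1 + k * k * B)) by (rewrite HVe; field; lra).
      nra. }
    apply Rmult_le_reg_r with (P * P). exact HPP.
    replace (8 / (P * P) * (P * P)) with 8 by (field; lra).
    destruct (Rle_or_lt B 0) as [hb|hb]. nra.
    assert (k * k * B * 9 <= P * P * B) by nra.
    nra. }
  assert (HPV : 0 <= P * V) by nra.
  eapply Rle_trans. apply sqrt_minus1. exact HPV.
  rewrite EV. rewrite Rabs_mult. rewrite (Rabs_right (k * k)) by nra.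
  replace (8 * (k ^ 2 / P ^ 2)) with (k * k * (8 / (P * P))) by (field; lra).
  apply Rmult_le_compat_l. nra. apply Rabs_le. lra.
Qed.

Lemma div_nonneg X M : 0 < M -> 0 <= X -> 0 <= X / M.
Proof. intros. unfold Rdiv. apply Rmult_le_pos; auto. left; apply Rinv_0_lt_compat; auto. Qed.

Lemma main_n (p : nat) (k : R) : (4 <= p)%nat -> 0 < k -> 9 * (k * k) <= INR p * INR p ->
  Rabs (sqrt (INR p * variance_pk p k) - 1) <= 8 * (k ^ 2 / INR p ^ 2).
Proof.
  intros Hp Hk Hk2.
  destruct p as [|[|[|[|q]]]]; try lia.
  set (p := S (S (S (S q)))) in *.
  assert (H3 : (3 <= p)%nat) by (unfold p; lia).
  assert (HP : 4 <= INR p) by (replace 4 with (INR 4) by (simpl; ring); apply le_INR; auto).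
  set (M0 := Mo p k 0). set (M1 := Mo p k 1). set (M2 := Mo p k 2). set (M3 := Mo p k 3). set (M4 := Mo p k 4).
  assert (HM0 : 0 < M0) by (apply M0_pos; auto).
  assert (Hc : c_pk p k = 1 / M0).
  { unfold c_pk. f_equal.
    replace (dens0 p k) with (fun t => poly 1 0 0 0 0 t * dens0 p k t).
    rewrite Dint_pd by auto. unfold M0. ring.
    apply functional_extensionality; intros t; unfold poly; ring. }
  assert (Hmu : mean_pk p k = M1 / M0).
  { unfold mean_pk. rewrite Hc.
    replace (fun u => u * (1 / M0 * dens0 p k u)) with (fun t => poly 0 (1/M0) 0 0 0 t * dens0 p k t).
    rewrite Dint_pd by auto. unfold M1. field. lra.
    apply functional_extensionality; intros t; unfold poly; ring. }
  assert (Hvar : variance_pk p k = M2 / M0 - (M1 / M0) * (M1 / M0)).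
  { unfold variance_pk. rewrite Hmu, Hc.
    replace (fun u => (u - M1 / M0) ^ 2 * (1 / M0 * dens0 p k u)) with
      (fun t => poly (1/M0 * (M1/M0)^2) (-2 * (1/M0) * (M1/M0)) (1/M0) 0 0 t * dens0 p k t).
    rewrite Dint_pd by auto. fold M0 M1 M2 M3 M4. field. lra.
    apply functional_extensionality; intros t; unfold poly; ring. }
  rewrite Hvar.
  assert (I1 : k * M0 - (INR p - 1) * M1 - k * M2 = 0).
  { assert (E := ibp q k (fun _ => 1) (fun _ => 0) (fun x => ltac:(auto_derive; auto; ring)) (fun x => continuous_const _ x)).
    fold p in E. rewrite <- E.
    replace (k * M0 - (INR p - 1) * M1 - k * M2) with (k * M0 + (- (INR p - 1)) * M1 + (-k) * M2 + 0 * M3 + 0 * M4) by ring.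
    unfold M0, M1, M2, M3, M4. rewrite <- int_pd by auto.
    apply RInt_ext. intros; unfold poly; simpl; ring. }
  assert (I2 : M0 + k * M1 - INR p * M2 - k * M3 = 0).
  { assert (E := ibp q k (fun t => t) (fun _ => 1) (fun x => ltac:(auto_derive; auto; ring)) (fun x => continuous_const _ x)).
    fold p in E. rewrite <- E.
    replace (M0 + k * M1 - INR p * M2 - k * M3) with (1 * M0 + k * M1 + (- INR p) * M2 + (-k) * M3 + 0 * M4) by ring.
    unfold M0, M1, M2, M3, M4. rewrite <- int_pd by auto.
    apply RInt_ext. intros; unfold poly; simpl; ring. }
  assert (I3 : 2 * M1 + k * M2 - (INR p + 1) * M3 - k * M4 = 0).
  { assert (E := ibp q k (fun t => t ^ 2) (fun t => 2 * t) (fun x => ltac:(auto_derive; auto; ring))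
                 (fun x => ltac:(apply (@ex_derive_continuous R_AbsRing R_NormedModule); auto_derive; auto))).
    fold p in E. rewrite <- E.
    replace (2 * M1 + k * M2 - (INR p + 1) * M3 - k * M4) with (0 * M0 + 2 * M1 + k * M2 + (- (INR p + 1)) * M3 + (-k) * M4) by ring.
    unfold M0, M1, M2, M3, M4. rewrite <- int_pd by auto.
    apply RInt_ext. intros; unfold poly; simpl; ring. }
  set (m1 := M1 / M0). set (m2 := M2 / M0). set (m3 := M3 / M0). set (m4 := M4 / M0).
  assert (NN : forall c0 c1 c2 c3 c4, (forall t, -1 < t < 1 -> 0 <= poly c0 c1 c2 c3 c4 t) ->
            0 <= c0 + c1 * m1 + c2 * m2 + c3 * m3 + c4 * m4).
  { intros c0 c1 c2 c3 c4 Hpos.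
    replace (c0 + c1 * m1 + c2 * m2 + c3 * m3 + c4 * m4) with
      ((c0 * M0 + c1 * M1 + c2 * M2 + c3 * M3 + c4 * M4) / M0) by (unfold m1, m2, m3, m4; field; lra).
    apply div_nonneg; auto. apply nonneg_pd; auto. }
  assert (Hm1a := NN 1 1 0 0 0 ltac:(intros t Ht; unfold poly; lra)).
  assert (Hm1b := NN 1 (-1) 0 0 0 ltac:(intros t Ht; unfold poly; lra)).
  assert (Hm2a := NN 0 0 1 0 0 ltac:(intros t Ht; unfold poly; nra)).
  assert (Hm2b := NN 1 0 (-1) 0 0 ltac:(intros t Ht; unfold poly; nra)).
  assert (HV := NN (m1 * m1) (-2 * m1) 1 0 0 ltac:(intros t Ht; replace (poly _ _ _ _ _ t) with ((t - m1) * (t - m1)) by (unfold poly; ring); apply Rle_0_sqr)).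
  assert (HVs0 := NN (m2 * m2) 0 (-2 * m2) 0 1 ltac:(intros t Ht; replace (poly _ _ _ _ _ t) with ((t ^ 2 - m2) * (t ^ 2 - m2)) by (unfold poly; ring); apply Rle_0_sqr)).
  assert (Hm1 : -1 <= m1 <= 1) by lra.
  assert (HW : 0 <= (4 * (m1 * m1) - (m1 * m1) * (m1 * m1)) + (-8 * m1) * m1 + (4 + 2 * (m1 * m1)) * m2 + 0 * m3 + (-1) * m4).
  { apply NN. intros t Ht.
    assert (0 <= 2 - (t + m1)) by lra. assert (0 <= 2 + (t + m1)) by lra.
    assert (0 <= 4 - (t + m1) * (t + m1)) by nra.
    replace (poly _ _ _ _ _ t) with ((t - m1) * (t - m1) * (4 - (t + m1) * (t + m1))) by (unfold poly; ring).
    apply Rmult_le_pos; [apply Rle_0_sqr | lra]. }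
  apply (alg (INR p) k m1 m2 m3 m4); auto.
  - replace (k - (INR p - 1) * m1 - k * m2) with ((k * M0 - (INR p - 1) * M1 - k * M2) / M0) by (unfold m1, m2; field; lra).
    rewrite I1. unfold Rdiv; ring.
  - replace (1 + k * m1 - INR p * m2 - k * m3) with ((M0 + k * M1 - INR p * M2 - k * M3) / M0) by (unfold m1, m2, m3; field; lra).
    rewrite I2. unfold Rdiv; ring.
  - replace (2 * m1 + k * m2 - (INR p + 1) * m3 - k * m4) with ((2 * M1 + k * M2 - (INR p + 1) * M3 - k * M4) / M0) by (unfold m1, m2, m3, m4; field; lra).
    rewrite I3. unfold Rdiv; ring.
  - lra.
  - assert (0 <= (m2 - m1 * m1) * (m2 - m1 * m1)) by nra. nra.
  - lra.
  - lra.
Qed.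

Theorem lemmaA6 (p : nat -> nat) (kappa : nat -> R)
  (hp2 : forall n, (2 <= p n)%nat)
  (hpinf : forall M : nat, exists N : nat, forall n, (N <= n)%nat -> (M <= p n)%nat)
  (hkpos : forall n, 0 < kappa n)
  (hko : Un_cv (fun n => kappa n / INR (p n)) 0) :
  exists C : R, exists N : nat, forall n, (N <= n)%nat ->
    Rabs (sqrt (INR (p n) * variance_pk (p n) (kappa n)) - 1)
      <= C * (kappa n ^ 2 / INR (p n) ^ 2).
Proof.
  destruct (hko (1/3) ltac:(lra)) as [N1 HN1].
  destruct (hpinf 4%nat) as [N2 HN2].
  exists 8, (Nat.max N1 N2). intros n Hn.
  assert (H4 := HN2 n ltac:(lia)).
  assert (Hd := HN1 n ltac:(lia)). unfold R_dist in Hd. rewrite Rminus_0_r in Hd.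
  apply Rabs_def2 in Hd.
  assert (HP : 4 <= INR (p n)) by (replace 4 with (INR 4) by (simpl; ring); apply le_INR; auto).
  apply main_n; auto.
  assert (Hk3 : kappa n <= INR (p n) / 3).
  { destruct Hd as [Hd _]. apply Rmult_lt_compat_r with (r := INR (p n)) in Hd; [|lra].
    unfold Rdiv in Hd. rewrite Rmult_assoc, Rinv_l in Hd by lra. lra. }
  specialize (hkpos n). nra.
Qed.
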